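(* Let $p$ be an odd prime and $\mathbf{k}=(k_1,k_2)$ with $k_1>k_2>0$. Let $a,c$ be positive integers with $0<k_1c\le p-1$ and $a+(k_1-1)c<p-1$. Then $$(a,\;p-1-(a+(k_1-1)c),\;(k_1-k_2+1)c-1,\;c)\in\mathcal{A}_{\mathbf{k}}.$$
   Context: Define, for integers $a,b_1,b_2,c$, the formal expression $$R_{\mathbf{k}}(a,b_1,b_2,c)=(-1)^{k_1+k_2}\prod_{i=1}^{k_1-k_2}\frac{(b_1+(i-1)c)!}{(1+a+b_1+(i+k_1-2)c-p)!}\prod_{i=1}^{k_2}\frac{(b_2+(i-1)c)!}{(1+b_2+(i+k_2-k_1-2)c)!}\cdot\frac{(1+b_1+b_2+(i-2)c)!}{(2+a+b_1+b_2+(i+k_1-3)c-p)!}$$ $$\times\prod_{i=1}^{k_1}(a+(i-1)c)!\prod_{i=1}^{k_2}(p+(i-k_1-1)c)!\prod_{r=1}^2\prod_{i=1}^{k_r}\frac{(ic)!}{c!}.$$ $\mathcal{A}_{\mathbf{k}}$ is the set of $(a,b_1,b_2,c)\in\mathbb{Z}_{>0}^4$ with $a+(k_1-1)c<p-1$ such that every factorial $x!$ appearing in this expression satisfies $0\le x<p$. *)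

(* Defs.v *)
From mathcomp Require Import all_boot all_order all_algebra.
Set Implicit Arguments. Unset Strict Implicit. Unset Printing Implicit Defensive.
Import Order.TTheory GRing.Theory Num.Theory.
Local Open Scope ring_scope.

Definition fact_ok (p : nat) (x : int) : Prop := 0 <= x /\ x < p%:Z.

(* Membership of (a,b1,b2,c) in the set A_k, k = (k1,k2): every factorial
   argument occurring in R_k(a,b1,b2,c) lies in [0,p). *)
Definition in_A (p k1 k2 : nat) (a b1 b2 c : int) : Prop :=
  [/\ 0 < a, 0 < b1, 0 < b2 & 0 < c] /\
  (a + (k1%:Z - 1) * c < p%:Z - 1) /\
      (forall i : nat, (1 <= i <= k1 - k2)%N ->
         fact_ok p (b1 + (i%:Z - 1) * c) /\
         fact_ok p (1 + a + b1 + (i%:Z + k1%:Z - 2) * c - p%:Z)) /\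
      (forall i : nat, (1 <= i <= k2)%N ->
         [/\ fact_ok p (b2 + (i%:Z - 1) * c),
             fact_ok p (1 + b2 + (i%:Z + k2%:Z - k1%:Z - 2) * c),
             fact_ok p (1 + b1 + b2 + (i%:Z - 2) * c) &
             fact_ok p (2 + a + b1 + b2 + (i%:Z + k1%:Z - 3) * c - p%:Z)]) /\
      (forall i : nat, (1 <= i <= k1)%N -> fact_ok p (a + (i%:Z - 1) * c)) /\
      (forall i : nat, (1 <= i <= k2)%N -> fact_ok p (p%:Z + (i%:Z - k1%:Z - 1) * c)) /\
      (* (ic)!/c!, r = 1,2, i = 1 .. k_r *)
      (forall i : nat, ((1 <= i <= k1) || (1 <= i <= k2))%N ->
         fact_ok p (i%:Z * c) /\ fact_ok p c).

(* Main.v *)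
Require Import Defs.
From mathcomp Require Import all_boot all_order all_algebra.
From mathcomp Require Import zify.
Import Order.TTheory GRing.Theory Num.Theory.
Local Open Scope ring_scope.

Theorem lemma5p5 (p k1 k2 : nat) (a c : int) :
  prime p -> odd p -> (0 < k2)%N -> (k2 < k1)%N ->
  0 < a -> 0 < c ->
  0 < k1%:Z * c -> k1%:Z * c <= p%:Z - 1 ->
  a + (k1%:Z - 1) * c < p%:Z - 1 ->
  in_A p k1 k2 a (p%:Z - 1 - (a + (k1%:Z - 1) * c))
       ((k1%:Z - k2%:Z + 1) * c - 1) c.
Proof.
move=> _ _ hk2 hk12 ha hc h0 h1 h2.
have hk2' : 0 < k2%:Z by rewrite ltz_nat.
have hk12' : k2%:Z < k1%:Z by rewrite ltz_nat.
rewrite /in_A /fact_ok.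
split; first by split=> //; nia.
split; first by [].
split.
  move=> i /andP [hi1 hi2].
  have hi1' : 1 <= i%:Z by rewrite lez_nat.
  have hi2' : i%:Z <= k1%:Z - k2%:Z by lia.
  split; split; nia.
split.
  move=> i /andP [hi1 hi2].
  have hi1' : 1 <= i%:Z by rewrite lez_nat.
  have hi2' : i%:Z <= k2%:Z by rewrite lez_nat.
  split; split; nia.
split.
  move=> i /andP [hi1 hi2].
  have hi1' : 1 <= i%:Z by rewrite lez_nat.
  have hi2' : i%:Z <= k1%:Z by rewrite lez_nat.
  split; nia.
split.
  move=> i /andP [hi1 hi2].
  have hi1' : 1 <= i%:Z by rewrite lez_nat.
  have hi2' : i%:Z <= k2%:Z by rewrite lez_nat.
  split; nia.
move=> i /orP [] /andP [hi1 hi2].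
  have hi1' : 1 <= i%:Z by rewrite lez_nat.
  have hi2' : i%:Z <= k1%:Z by rewrite lez_nat.
  split; split; nia.
have hi1' : 1 <= i%:Z by rewrite lez_nat.
have hi2' : i%:Z <= k2%:Z by rewrite lez_nat.
split; split; nia.
Qed.
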